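(* Let $\mathfrak{I}=(\mathcal{I},[\mathcal{F}_1,\dots,\mathcal{F}_k],\mathcal{X},\pi,\sim,\mathcal{S})$ be a domain constrained interpretation and $C_1,\dots,C_4,D_1,\dots,D_4$ natural concepts such that $(C_i\sqcap D_i)^{\mathcal{I}}\neq\emptyset$ for $i\in\{1,2,3,4\}$ and $\mathfrak{I}$ satisfies the analogy assertions $C_1:C_2::C_3:C_4$ and $D_1:D_2::D_3:D_4$. Then $\mathfrak{I}$ also satisfies $(C_1\sqcap D_1):(C_2\sqcap D_2)::(C_3\sqcap D_3):(C_4\sqcap D_4)$.
   Context: Concepts: $C,D::=\top\mid\bot\mid A\mid C\sqcap D\mid \exists r.C\mid N$; natural concepts: $N,N'::=A'\mid N\sqcap N'\mid N\bowtie N'\mid \exists r'.N$, with $A$ a concept name, $A'$ a natural concept name, $r$ a role name, $r'$ an intra-domain role name. A domain constrained interpretation is $\mathfrak{I}=(\mathcal{I},[\mathcal{F}_1,\dots,\mathcal{F}_k],\mathcal{X},\pi,\sim,\mathcal{S})$ where $\mathcal{I}=(\Delta^{\mathcal{I}},\cdot^{\mathcal{I}})$ is a classical DL interpretation, $[\mathcal{F}_1,\dots,\mathcal{F}_k]$ partitions a nonempty finite set $\mathcal{F}$, $\mathcal{X}\subseteq2^{\mathcal{F}}$ with $\mathcal{F}\in\mathcal{X}$, $\pi:\Delta^{\mathcal{I}}\to2^{\mathcal{F}}$, $\sim$ an equivalence relation on $\{1,\dots,k\}$, $\mathcal{S}=\{\sigma_{(s,t)}\mid(s,t)\in\sim\}$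 with $\sigma_{(s,t)}:\mathcal{F}_s\to\mathcal{F}_t$ bijections. With $\mathcal{C}=\{G\subseteq\mathcal{F}\mid X\not\subseteq G\ \forall X\in\mathcal{X}\}$ and $\mathcal{C}^i=\{G\in\mathcal{C}\mid G\subseteq\mathcal{F}_i\}$ it is required: (1) $X\not\subseteq\pi(d)$ for all $d$, $X\in\mathcal{X}$; (2) each $G\in\mathcal{C}$ is $\pi(d)$ for some $d$; (3) $\sigma_{(s,t)}^{-1}=\sigma_{(t,s)}$, $\sigma_{(t,u)}\circ\sigma_{(s,t)}=\sigma_{(s,u)}$; (4) $\sigma_{(i,j)}(G)\in\mathcal{C}$ for $G\in\mathcal{C}^i$, $(i,j)\in\sim$; (5) $\{f,g\}\in\mathcal{X}$ whenever $f\in\mathcal{F}_i$, $g\in\mathcal{F}_j$, $(i,j)\in\sim$, $i\neq j$. $\varphi(C)=\bigcap\{\pi(d)\mid d\in C^{\mathcal{I}}\}$ ($=\mathcal{F}$ if $C^{\mathcal{I}}=\emptyset$). Concepts are interpreted as usual (in particular $(C\sqcap D)^{\mathcal{I}}=C^{\mathcal{I}}\cap D^{\mathcal{I}}$), with $(N\bowtie N')^{\mathcal{I}}=\{d\mid\varphi(N)\cap\varphi(N')\subseteq\pi(d)\}$, and every intra-domain role name $r$ interpreted as an intra-domain relation: there is $\kappa_r:2^{\mathcal{F}}\to2^{\mathcal{F}}$ with $(\exists r.C)^{\mathcal{I}}=\{d\mid\kappa_r(\varphi(C))\subseteq\pi(d)\}$ for all $C$, $\kappa_r(G)=\bigcup_i\kappa_r(G\cap\mathcal{F}_i)$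 for $G\in\mathcal{C}$, $\kappa_r(G)\subseteq\mathcal{F}_i$ for $G\in\mathcal{C}^i$, $\kappa_r(\sigma_{(i,j)}(G))=\sigma_{(i,j)}(\kappa_r(G))$ for $(i,j)\in\sim$, $G\in\mathcal{C}^i$, and $\kappa_r(G)\neq\emptyset$ for $G\in\mathcal{C}^i\setminus\{\emptyset\}$. $\delta(C)=\{i\mid\mathcal{F}_i\cap\varphi(C)\neq\emptyset\}$. For $U=\{(s_1,t_1),\dots,(s_l,t_l)\}\subseteq\sim$ with pairwise distinct $s_i$ and pairwise distinct $t_i$, the domain translation $\sigma_U:\mathcal{F}\to\mathcal{F}$ maps $f\in\mathcal{F}_{s_i}$ to $\sigma_{(s_i,t_i)}(f)$ and fixes all other features; $\mathrm{src}(U)=\{s_i\}$, $\mathrm{tgt}(U)=\{t_i\}$. $\mu(C,D)$ is the set of $\sigma_U$ with $\varphi(D)=\sigma_U(\varphi(C))$, $\mathrm{src}(U)\subseteq\delta(C)$, $\mathrm{tgt}(U)\cap(\delta(C)\setminus\mathrm{src}(U))=\emptyset$. An analogy assertion $C_1:C_2::D_1:D_2$ (between natural concepts) is satisfied in $\mathfrak{I}$ iff $\mu(C_1,C_2)\cap\mu(D_1,D_2)\neq\emptyset$. *)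

(* Defs.v *)
From mathcomp Require Import all_boot.
From mathcomp Require Import boolp.

Set Implicit Arguments.
Unset Strict Implicit.
Unset Printing Implicit Defensive.

Inductive concept (CN RN : Type) : Type :=
  | CTop
  | CBot
  | CAtom of CN
  | CAnd of concept CN RN & concept CN RN
  | CEx of RN & concept CN RN
  | CBow of concept CN RN & concept CN RN.

Arguments CTop {CN RN}.
Arguments CBot {CN RN}.
Arguments CAtom {CN RN}.
Arguments CAnd {CN RN}.
Arguments CEx {CN RN}.
Arguments CBow {CN RN}.

(* Natural concepts: N ::= A' | N and N' | N bowtie N' | exists r'.N,
   where natCN marks natural concept names and intra marks intra-domain
   role names. *)
Fixpoint natural (CN RN : Type) (natCN : CN -> Prop) (intra : RN -> Prop)
    (C : concept CN RN) : Prop :=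
  match C with
  | CAtom A => natCN A
  | CAnd N N' => natural natCN intra N /\ natural natCN intra N'
  | CBow N N' => natural natCN intra N /\ natural natCN intra N'
  | CEx r N => intra r /\ natural natCN intra N
  | _ => False
  end.

Section DCI.
Variables (CN RN : Type) (F : finType) (k : nat) (Delta : Type).

(* The data of a domain constrained interpretation
   (I, [F_1,...,F_k], X, pi, ~, S): the feature set is the finite type F,
   the partition into F_1..F_k is given by blk (F_i = blk^-1(i)),
   Delta is the domain of the classical interpretation I, cnI / rnI interpret
   concept and role names, eqv is ~, and sigma s t is sigma_(s,t)
   (only its restriction to F_s matters). *)
Record dci := DCI {
  blk : F -> 'I_k;
  Xc : {set {set F}};
  pi : Delta -> {set F};
  eqv : rel 'I_k;
  sigma : 'I_k -> 'I_k -> F -> F;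
  cnI : CN -> Delta -> Prop;
  rnI : RN -> Delta -> Delta -> Prop }.

Variable I : dci.

Definition Fb (i : 'I_k) : {set F} := [set f | blk I f == i].

Definition consistent (G : {set F}) : bool :=
  [forall X in Xc I, ~~ (X \subset G)].

(* phi of an extension: intersection of pi(d), d in S (= F if S empty) *)
Definition phi_of (S : Delta -> Prop) : {set F} :=
  [set f | `[< forall d, S d -> f \in pi I d >]].

Fixpoint interp (C : concept CN RN) : Delta -> Prop :=
  match C with
  | CTop => fun _ => True
  | CBot => fun _ => False
  | CAtom A => cnI I A
  | CAnd C D => fun d => interp C d /\ interp D d
  | CEx r C => fun d => exists e, rnI I r d e /\ interp C e
  | CBow N N' => fun d =>
      (phi_of (interp N) :&: phi_of (interp N')) \subset pi I d
  end.

Definition phi (C : concept CN RN) : {set F} := phi_of (interp C).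

Definition intra_domain_relation (r : RN) : Prop :=
  exists kappa : {set F} -> {set F},
    [/\ (forall (C : concept CN RN) d,
           interp (CEx r C) d <-> kappa (phi C) \subset pi I d),
        (forall G, consistent G ->
           kappa G = \bigcup_(i < k) kappa (G :&: Fb i)),
        (forall i G, consistent G -> G \subset Fb i -> kappa G \subset Fb i),
        (forall i j G, eqv I i j -> consistent G -> G \subset Fb i ->
           kappa (sigma I i j @: G) = sigma I i j @: kappa G) &
        (forall i G, consistent G -> G \subset Fb i -> G != set0 ->
           kappa G != set0)].

Definition is_dci (natCN : CN -> Prop) (intra : RN -> Prop) : Prop :=
  [/\
      inhabited Delta,
    [/\
      0 < #|F| /\ (forall i : 'I_k, exists f, blk I f = i),
      setT \in Xc I,
      (forall d, consistent (pi I d)) &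
      (forall G, consistent G -> exists d, pi I d = G)],
      [/\ reflexive (eqv I), symmetric (eqv I) & transitive (eqv I)],
      [/\ (forall s t f, eqv I s t -> f \in Fb s -> sigma I s t f \in Fb t),
          (forall s t f, eqv I s t -> f \in Fb s ->
             sigma I t s (sigma I s t f) = f),
          (forall s t u f, eqv I s t -> eqv I t u -> f \in Fb s ->
             sigma I t u (sigma I s t f) = sigma I s u f) &
      (forall i j G, eqv I i j -> consistent G -> G \subset Fb i ->
         consistent (sigma I i j @: G))] &
      [/\
          (forall i j f g, eqv I i j -> i != j -> f \in Fb i -> g \in Fb j ->
             [set f; g] \in Xc I),
          (forall A, natCN A -> forall d,
             cnI I A d <-> phi (CAtom A) \subset pi I d) &
          (forall r, intra r -> intra_domain_relation r)]].

Definition deltaC (C : concept CN RN) : {set 'I_k} :=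
  [set i | Fb i :&: phi C != set0].

Definition valid_U (U : {set 'I_k * 'I_k}) : Prop :=
  [/\ (forall p, p \in U -> eqv I p.1 p.2),
      (forall p q, p \in U -> q \in U -> p.1 = q.1 -> p = q) &
      (forall p q, p \in U -> q \in U -> p.2 = q.2 -> p = q)].

Definition srcU (U : {set 'I_k * 'I_k}) : {set 'I_k} := [set p.1 | p in U].
Definition tgtU (U : {set 'I_k * 'I_k}) : {set 'I_k} := [set p.2 | p in U].

Definition sigmaU (U : {set 'I_k * 'I_k}) (f : F) : F :=
  match [pick p in U | p.1 == blk I f] with
  | Some p => sigma I p.1 p.2 f
  | None => f
  end.

Definition in_mu (C D : concept CN RN) (tau : F -> F) : Prop :=
  exists U, [/\ valid_U U, tau =1 sigmaU U,
     phi D = tau @: phi C,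
     srcU U \subset deltaC C &
     tgtU U :&: (deltaC C :\: srcU U) == set0].

Definition sat_analogy (C1 C2 D1 D2 : concept CN RN) : Prop :=
  exists tau, in_mu C1 C2 tau /\ in_mu D1 D2 tau.

End DCI.

(* Main.v *)
Require Import Defs.
From mathcomp Require Import all_boot.
From mathcomp Require Import boolp.

Set Implicit Arguments.
Unset Strict Implicit.

Lemma sigma_id (CN RN : Type) (natCN : CN -> Prop) (intra : RN -> Prop)
    (F : finType) (k : nat) (Delta : Type) (I : dci CN RN F k Delta)
    (HI : is_dci I natCN intra) i f :
  f \in Fb I i -> sigma I i i f = f.
Proof.
case: HI => _ _ [Hr _ _] [_ H3a H3b _] _ Hf.
have e1 := H3a i i f (Hr i) Hf.
have e2 := H3b i i i f (Hr i) (Hr i) Hf.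
by rewrite -e2 e1.
Qed.

Lemma sigma_blk (CN RN : Type) (natCN : CN -> Prop) (intra : RN -> Prop)
    (F : finType) (k : nat) (Delta : Type) (I : dci CN RN F k Delta)
    (HI : is_dci I natCN intra) s t f :
  eqv I s t -> blk I f = s -> blk I (sigma I s t f) = t.
Proof.
case: HI => _ _ _ [H _ _ _] _ Hst Hf.
have : sigma I s t f \in Fb I t by apply: H => //; rewrite inE Hf.
by rewrite inE => /eqP.
Qed.

Lemma noequiv (CN RN : Type) (natCN : CN -> Prop) (intra : RN -> Prop)
    (F : finType) (k : nat) (Delta : Type) (I : dci CN RN F k Delta)
    (HI : is_dci I natCN intra) d f g :
  f \in Defs.pi I d -> g \in Defs.pi I d -> eqv I (blk I f) (blk I g) -> blk I f = blk I g.
Proof.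
case: HI => _ [_ _ H1 _] _ _ [H5 _ _] Hf Hg He.
case: (eqVneq (blk I f) (blk I g)) => // Hne.
have Hf' : f \in Fb I (blk I f) by rewrite inE.
have Hg' : g \in Fb I (blk I g) by rewrite inE.
have HX := H5 _ _ f g He Hne Hf' Hg'.
have := H1 d; rewrite /consistent => /forallP /(_ [set f; g]).
rewrite HX /= => /negP; case.
  by apply/subsetP => x; rewrite !inE => /orP [] /eqP ->.
Qed.

Lemma nat_form (CN RN : Type) (natCN : CN -> Prop) (intra : RN -> Prop)
    (F : finType) (k : nat) (Delta : Type) (I : dci CN RN F k Delta)
    (HI : is_dci I natCN intra) C :
  natural natCN intra C -> exists S : {set F}, forall d, interp I C d <-> S \subset Defs.pi I d.
Proof.
case: HI => _ _ _ _ [_ Hat Hr].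
elim: C => //=.
- by move=> A HA; exists (phi I (CAtom A)) => d; apply: Hat.
- move=> C IHC D IHD [/IHC [S1 H1] /IHD [S2 H2]]; exists (S1 :|: S2) => d.
  by rewrite subUset H1 H2; split => [[-> ->]|/andP []].
- move=> r C _ [/Hr [kap [Hk _ _ _ _]] _]; exists (kap (phi I C)) => d.
  exact: Hk.
- by move=> C _ D _ _; exists (phi I C :&: phi I D : {set F}).
Qed.

Lemma nat_closed (CN RN : Type) (natCN : CN -> Prop) (intra : RN -> Prop)
    (F : finType) (k : nat) (Delta : Type) (I : dci CN RN F k Delta)
    (HI : is_dci I natCN intra) C :
  natural natCN intra C -> forall d, interp I C d <-> phi I C \subset Defs.pi I d.
Proof.
move=> /(nat_form HI) [S HS] d; split.
- move=> Hd; apply/subsetP => f; rewrite inE => /asboolP; exact.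
- move=> Hsub; apply/HS; apply: subset_trans Hsub.
  apply/subsetP => f Hf; rewrite inE; apply/asboolP => d' /HS /subsetP; exact.
Qed.

Lemma phi_sub (CN RN : Type) (F : finType) (k : nat) (Delta : Type)
   (I : dci CN RN F k Delta) C d :
  interp I C d -> phi I C \subset Defs.pi I d.
Proof. move=> Hd; apply/subsetP => f; rewrite inE => /asboolP; exact. Qed.

Lemma phi_and (CN RN : Type) (natCN : CN -> Prop) (intra : RN -> Prop)
    (F : finType) (k : nat) (Delta : Type) (I : dci CN RN F k Delta)
    (HI : is_dci I natCN intra) C D :
  natural natCN intra C -> natural natCN intra D ->
  (exists d, interp I (CAnd C D) d) ->
  phi I (CAnd C D) = phi I C :|: phi I D.
Proof.
move=> nC nD [d0 [H0C H0D]].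
have HI' := HI; case: HI' => _ [_ _ H1 H2] _ _ _.
apply/eqP; rewrite eqEsubset; apply/andP; split; last first.
  apply/subsetP => f Hf; rewrite inE; apply/asboolP => d [HC HD].
  move: Hf; rewrite inE => /orP [] Hf.
  - exact: (subsetP (phi_sub HC)).
  - exact: (subsetP (phi_sub HD)).
have Hs : phi I C :|: phi I D \subset Defs.pi I d0.
  by rewrite subUset !phi_sub.
have : consistent I (phi I C :|: phi I D).
  apply/forallP => X; apply/implyP => HX; apply/negP => HXs.
  have := H1 d0 => /forallP /(_ X); rewrite HX /= => /negP; apply.
  exact: subset_trans HXs Hs.
move=> /H2 [d Hd].
have Hint : interp I (CAnd C D) d.
  by split; apply/(nat_closed HI) => //; rewrite Hd ?subsetUl ?subsetUr.
by rewrite -Hd; apply: phi_sub.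
Qed.

Lemma sigmaU_in (CN RN : Type) (F : finType) (k : nat) (Delta : Type)
   (I : dci CN RN F k Delta) (U : {set 'I_k * 'I_k}) p f :
  (forall p q, p \in U -> q \in U -> p.1 = q.1 -> p = q) ->
  p \in U -> p.1 = blk I f -> sigmaU I U f = sigma I p.1 p.2 f.
Proof.
move=> Hu Hp Hp1; rewrite /sigmaU; case: pickP => [q /andP [Hq /eqP Hq1]|H].
- by rewrite (Hu q p) // Hq1.
- by move: (H p); rewrite Hp Hp1 eqxx.
Qed.

Lemma sigmaU_out (CN RN : Type) (F : finType) (k : nat) (Delta : Type)
   (I : dci CN RN F k Delta) (U : {set 'I_k * 'I_k}) f :
  (forall p, p \in U -> p.1 <> blk I f) -> sigmaU I U f = f.
Proof.
move=> Hu; rewrite /sigmaU; case: pickP => [q /andP [Hq /eqP Hq1]|//].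
by case: (Hu q Hq).
Qed.

Lemma deltaP (CN RN : Type) (F : finType) (k : nat) (Delta : Type)
   (I : dci CN RN F k Delta) C i :
  i \in deltaC I C -> exists f, f \in phi I C /\ blk I f = i.
Proof.
rewrite inE => /set0Pn [f] /setIP [H1 H2].
by exists f; split => //; move: H1; rewrite inE => /eqP.
Qed.


Lemma delta_and (CN RN : Type) (F : finType) (k : nat) (Delta : Type)
   (I : dci CN RN F k Delta) C D :
  phi I (CAnd C D) = phi I C :|: phi I D ->
  deltaC I (CAnd C D) = deltaC I C :|: deltaC I D.
Proof.
move=> H; apply/setP => i; rewrite /deltaC in_setU !in_set H setIUr setU_eq0 negb_and //.
Qed.

Lemma tgt_part (CN RN : Type) (natCN : CN -> Prop) (intra : RN -> Prop)
    (F : finType) (k : nat) (Delta : Type) (I : dci CN RN F k Delta)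
    (HI : is_dci I natCN intra) Cx Dx (U : {set 'I_k * 'I_k}) dx p :
  (forall p, p \in U -> eqv I p.1 p.2) -> srcU U \subset deltaC I Cx ->
  tgtU U :&: (deltaC I Cx :\: srcU U) == set0 ->
  phi I Cx :|: phi I Dx \subset Defs.pi I dx -> p \in U ->
  p.2 \in deltaC I Cx :|: deltaC I Dx -> p.2 \in srcU U.
Proof.
move=> Ue Hsrc Htgt Hdx Hp; rewrite in_setU => /orP [] Hj.
- apply/negPn/negP => Hn.
  have Ht : p.2 \in tgtU U by apply/imsetP; exists p.
  have : p.2 \in tgtU U :&: (deltaC I Cx :\: srcU U) by rewrite in_setI in_setD Hn Hj Ht.
  by rewrite (eqP Htgt) in_set0.
- have Hs : p.1 \in srcU U by apply/imsetP; exists p.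
  case: (deltaP (subsetP Hsrc _ Hs)) => f [Hf Hbf].
  case: (deltaP Hj) => g [Hg Hbg].
  have H1 : f \in Defs.pi I dx by apply: (subsetP Hdx); rewrite in_setU Hf.
  have H2 : g \in Defs.pi I dx by apply: (subsetP Hdx); rewrite in_setU Hg orbT.
  have := noequiv HI H1 H2; rewrite Hbf Hbg => /(_ (Ue p Hp)) E.
  by rewrite -E.
Qed.

Lemma pair_lemma (CN RN : Type) (natCN : CN -> Prop) (intra : RN -> Prop)
    (F : finType) (k : nat) (Delta : Type) (I : dci CN RN F k Delta)
    (HI : is_dci I natCN intra) Cx Dx Cy Dy (tau tau' : F -> F) dx dy :
  in_mu I Cx Cy tau -> in_mu I Dx Dy tau' ->
  phi I Cx :|: phi I Dx \subset Defs.pi I dx ->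
  phi I Cy :|: phi I Dy \subset Defs.pi I dy ->
  phi I (CAnd Cx Dx) = phi I Cx :|: phi I Dx ->
  phi I (CAnd Cy Dy) = phi I Cy :|: phi I Dy ->
  in_mu I (CAnd Cx Dx) (CAnd Cy Dy) (fun f => if tau f != f then tau f else tau' f).
Proof.
move=> HC HD Hdx Hdy Ex Ey.
have HI' := HI; case: HI' => _ _ [Hrefl Hsym Htr] _ _.
case: HC => U [[Ue Us Ut] HtU HphiC HsrcC HtgtC].
case: HD => V [[Ve Vs Vt] HtV HphiD HsrcD HtgtD].
have inCy : forall f, f \in phi I Cx -> tau f \in phi I Cy.
  by move=> f Hf; rewrite HphiC; apply: imset_f.
have inDy : forall f, f \in phi I Dx -> tau' f \in phi I Dy.
  by move=> f Hf; rewrite HphiD; apply: imset_f.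
have pCy : forall f, f \in phi I Cy -> f \in Defs.pi I dy.
  by move=> f Hf; apply: (subsetP Hdy); rewrite in_setU Hf.
have pDy : forall f, f \in phi I Dy -> f \in Defs.pi I dy.
  by move=> f Hf; apply: (subsetP Hdy); rewrite in_setU Hf orbT.
have pCx : forall f, f \in phi I Cx -> f \in Defs.pi I dx.
  by move=> f Hf; apply: (subsetP Hdx); rewrite in_setU Hf.
have pDx : forall f, f \in phi I Dx -> f \in Defs.pi I dx.
  by move=> f Hf; apply: (subsetP Hdx); rewrite in_setU Hf orbT.
have srcC : forall p, p \in U -> exists f, f \in phi I Cx /\ blk I f = p.1.
  by move=> p Hp; apply: deltaP; apply: (subsetP HsrcC); apply/imsetP; exists p.
have srcD : forall p, p \in V -> exists f, f \in phi I Dx /\ blk I f = p.1.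
  by move=> p Hp; apply: deltaP; apply: (subsetP HsrcD); apply/imsetP; exists p.
have tauU : forall p f, p \in U -> p.1 = blk I f -> tau f = sigma I p.1 p.2 f.
  by move=> p f Hp H; rewrite HtU (sigmaU_in Us Hp H).
have tauV : forall p f, p \in V -> p.1 = blk I f -> tau' f = sigma I p.1 p.2 f.
  by move=> p f Hp H; rewrite HtV (sigmaU_in Vs Hp H).
have tauU0 : forall f, (forall p, p \in U -> p.1 <> blk I f) -> tau f = f.
  by move=> f H; rewrite HtU sigmaU_out.
have tauV0 : forall f, (forall p, p \in V -> p.1 <> blk I f) -> tau' f = f.
  by move=> f H; rewrite HtV sigmaU_out.
have K1 : forall p q, p \in U -> q \in V -> p.1 = q.1 -> p = q.
  move=> p q Hp Hq E.
  case: (srcC p Hp) => f [Hf Hbf]; case: (srcD q Hq) => g [Hg Hbg].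
  have H1 := pCy _ (inCy _ Hf); have H2 := pDy _ (inDy _ Hg).
  have b1 : blk I (tau f) = p.2.
    by rewrite (tauU p f Hp (esym Hbf)); apply: (sigma_blk HI (Ue p Hp)).
  have b2 : blk I (tau' g) = q.2.
    by rewrite (tauV q g Hq (esym Hbg)); apply: (sigma_blk HI (Ve q Hq)).
  have := noequiv HI H1 H2; rewrite b1 b2 => Heq.
  have e2 : p.2 = q.2.
    apply: Heq; apply: (Htr p.1); first by rewrite Hsym; apply: Ue.
    by rewrite E; apply: Ve.
  by rewrite [p]surjective_pairing [q]surjective_pairing E e2.
have K2 : forall p q, p \in U -> q \in V -> p.2 = q.2 -> p = q.
  move=> p q Hp Hq E; apply: K1 => //.
  case: (srcC p Hp) => f [Hf Hbf]; case: (srcD q Hq) => g [Hg Hbg].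
  have := noequiv HI (pCx _ Hf) (pDx _ Hg); rewrite Hbf Hbg; apply.
  apply: (Htr p.2); first by apply: Ue.
  by rewrite E Hsym; apply: Ve.
have HUVs : forall p q, p \in U :|: V -> q \in U :|: V -> p.1 = q.1 -> p = q.
  move=> p q; rewrite !in_setU => /orP [] Hp /orP [] Hq E.
  - exact: Us.
  - exact: K1.
  - by rewrite (K1 q p Hq Hp (esym E)).
  - exact: Vs.
have HUVt : forall p q, p \in U :|: V -> q \in U :|: V -> p.2 = q.2 -> p = q.
  move=> p q; rewrite !in_setU => /orP [] Hp /orP [] Hq E.
  - exact: Ut.
  - exact: K2.
  - by rewrite (K2 q p Hq Hp (esym E)).
  - exact: Vt.
have srcUV : srcU (U :|: V) = srcU U :|: srcU V by rewrite /srcU imsetU.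
exists (U :|: V); split.
- split => //.
  by move=> p; rewrite in_setU => /orP [] Hp; [apply: Ue | apply: Ve].
- move=> f.
  case: (pselect (exists p, p \in U /\ p.1 = blk I f)) => [[p [Hp Hp1]]|nU].
  + have HpUV : p \in U :|: V by rewrite in_setU Hp.
    rewrite (sigmaU_in HUVs HpUV Hp1).
    rewrite -(tauU p f Hp Hp1); case: ifP => // /negbFE /eqP Htf.
    case: (pselect (exists q, q \in V /\ q.1 = blk I f)) => [[q [Hq Hq1]]|nV].
    * have E := K1 p q Hp Hq (etrans Hp1 (esym Hq1)); subst q.
      by rewrite (tauV p f Hq Hq1) (tauU p f Hp Hp1).
    * by rewrite tauV0 ?Htf // => q Hq Hq1; apply: nV; exists q.
  + have Htf : tau f = f by apply: tauU0 => p Hp Hp1; apply: nU; exists p.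
    rewrite Htf eqxx /=.
    case: (pselect (exists q, q \in V /\ q.1 = blk I f)) => [[q [Hq Hq1]]|nV].
    * have HqUV : q \in U :|: V by rewrite in_setU Hq orbT.
      by rewrite (tauV q f Hq Hq1) (sigmaU_in HUVs HqUV Hq1).
    * have -> : tau' f = f by apply: tauV0 => q Hq Hq1; apply: nV; exists q.
      rewrite sigmaU_out //.
      by move=> p; rewrite in_setU => /orP [] Hp Hp1; [apply: nU | apply: nV]; exists p.
- rewrite Ey Ex HphiC HphiD imsetU; congr (_ :|: _); apply: eq_in_imset => f Hf /=.
  + case: ifP => // /negbFE /eqP Htf.
    case: (pselect (exists q, q \in V /\ q.1 = blk I f)) => [[q [Hq Hq1]]|nV].
    * case: (srcD q Hq) => g [Hg Hbg].
      have H2 := pDy _ (inDy _ Hg).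
      have H1 : f \in Defs.pi I dy by apply: pCy; rewrite -Htf; apply: inCy.
      have b2 : blk I (tau' g) = q.2.
        by rewrite (tauV q g Hq (esym Hbg)); apply: (sigma_blk HI (Ve q Hq)).
      have := noequiv HI H1 H2; rewrite b2 -Hq1 => /(_ (Ve q Hq)) E2.
      rewrite Htf (tauV q f Hq Hq1) -E2 (sigma_id HI) //.
      by rewrite inE Hq1.
    * by rewrite tauV0 ?Htf // => q Hq Hq1; apply: nV; exists q.
  + case: ifP => [Hne|//].
    case: (pselect (exists p, p \in U /\ p.1 = blk I f)) => [[p [Hp Hp1]]|nU].
    * case: (pselect (exists q, q \in V /\ q.1 = blk I f)) => [[q [Hq Hq1]]|nV].
      - have E := K1 p q Hp Hq (etrans Hp1 (esym Hq1)); subst q.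
        by rewrite (tauV p f Hq Hq1) (tauU p f Hp Hp1).
      - case: (srcC p Hp) => g [Hg Hbg].
        have H1 := pCy _ (inCy _ Hg).
        have Htf : tau' f = f by apply: tauV0 => q Hq Hq1; apply: nV; exists q.
        have H2 : f \in Defs.pi I dy by rewrite -Htf; apply: pDy; apply: inDy.
        have b1 : blk I (tau g) = p.2.
          by rewrite (tauU p g Hp (esym Hbg)); apply: (sigma_blk HI (Ue p Hp)).
        have := noequiv HI H1 H2; rewrite b1 -Hp1 Hsym => /(_ (Ue p Hp)) E2.
        rewrite Htf (tauU p f Hp Hp1) E2 (sigma_id HI) //.
        by rewrite inE Hp1.
    * by move: Hne; rewrite tauU0 ?eqxx // => p Hp Hp1; apply: nU; exists p.
- by rewrite (delta_and Ex) srcUV; apply: setUSS.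
- rewrite (delta_and Ex); apply/eqP/setP => j; rewrite in_set0.
  apply/negP => /setIP [/imsetP [p HpUV ->] /setDP [Hj]].
  rewrite srcUV in_setU => /norP [Hn1 Hn2].
  move: HpUV; rewrite in_setU => /orP [] Hp.
  + by move: Hn1; rewrite (tgt_part HI Ue HsrcC HtgtC Hdx Hp Hj).
  + move: Hn2; rewrite (tgt_part (Dx := Cx) (dx := dx) HI Ve HsrcD HtgtD _ Hp) //.
    * by rewrite setUC.
    * by rewrite setUC.
Qed.

Theorem proposition8 (CN RN : Type) (natCN : CN -> Prop) (intra : RN -> Prop)
    (F : finType) (k : nat) (Delta : Type) (I : dci CN RN F k Delta)
    (HI : is_dci I natCN intra)
    (C1 C2 C3 C4 D1 D2 D3 D4 : concept CN RN)
    (nC1 : natural natCN intra C1) (nC2 : natural natCN intra C2)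
    (nC3 : natural natCN intra C3) (nC4 : natural natCN intra C4)
    (nD1 : natural natCN intra D1) (nD2 : natural natCN intra D2)
    (nD3 : natural natCN intra D3) (nD4 : natural natCN intra D4)
    (ne1 : exists d, interp I (CAnd C1 D1) d)
    (ne2 : exists d, interp I (CAnd C2 D2) d)
    (ne3 : exists d, interp I (CAnd C3 D3) d)
    (ne4 : exists d, interp I (CAnd C4 D4) d)
    (anC : sat_analogy I C1 C2 C3 C4)
    (anD : sat_analogy I D1 D2 D3 D4) :
  sat_analogy I (CAnd C1 D1) (CAnd C2 D2) (CAnd C3 D3) (CAnd C4 D4).
Proof.
have W : forall C D, (exists d, interp I (CAnd C D) d) ->
    exists d, phi I C :|: phi I D \subset Defs.pi I d.
  by move=> C D [d [HC HD]]; exists d; rewrite subUset !phi_sub.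
case: anC => tau [HC12 HC34]; case: anD => tau' [HD12 HD34].
case: (W _ _ ne1) => d1 H1; case: (W _ _ ne2) => d2 H2.
case: (W _ _ ne3) => d3 H3; case: (W _ _ ne4) => d4 H4.
exists (fun f => if tau f != f then tau f else tau' f); split.
- by apply: (pair_lemma HI HC12 HD12 H1 H2); apply: (phi_and HI).
- by apply: (pair_lemma HI HC34 HD34 H3 H4); apply: (phi_and HI).
Qed.
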